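(* Let $\phi$ be a positive, trace-preserving linear map on $\mathcal M(d;\mathbb C)$ whose space of fixed points $\eta_\phi=\{X:\phi(X)=X\}$ has dimension strictly greater than $1$. Then $\phi$ admits a semipositive fixed point, i.e. a nonzero $A\ge 0$ with $\det A=0$ and $\phi(A)=A$.
   Context: A linear map is positive if it maps positive semidefinite matrices to positive semidefinite matrices. Every positive trace-preserving map has a positive semidefinite fixed point of unit trace, and it maps Hermitian matrices to Hermitian matrices. *)

(* Defs.v *)
From HB Require Import structures.
From mathcomp Require Import all_boot all_order all_algebra.
Set Implicit Arguments. Unset Strict Implicit. Unset Printing Implicit Defensive.
Import Order.TTheory GRing.Theory Num.Theory.
Local Open Scope ring_scope.

Definition adjmx (C : numClosedFieldType) m n (A : 'M[C]_(m, n)) : 'M[C]_(n, m) :=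
  (map_mx Num.conj A)^T.

Definition hermitian (C : numClosedFieldType) n (A : 'M[C]_n) : bool :=
  adjmx A == A.

Definition psd (C : numClosedFieldType) n (A : 'M[C]_n) : Prop :=
  hermitian A /\ forall x : 'cV[C]_n, 0 <= (adjmx x *m A *m x) 0 0.

Definition positive_map (C : numClosedFieldType) n (phi : 'End('M[C]_n)) : Prop :=
  forall A : 'M[C]_n, psd A -> psd (phi A).

Definition trace_preserving (C : numClosedFieldType) n (phi : 'End('M[C]_n)) : Prop :=
  forall A : 'M[C]_n, \tr (phi A) = \tr A.

(* Main.v *)
Require Import Defs.
From HB Require Import structures.
From mathcomp Require Import all_boot all_order all_algebra.
From mathcomp Require Import sesquilinear spectral ring zify.
Import Defs.
Set Implicit Arguments. Unset Strict Implicit. Unset Printing Implicit Defensive.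
Import Order.TTheory GRing.Theory Num.Theory Num.Def.
Local Open Scope ring_scope.
Local Open Scope sesquilinear_scope.

Section S.
Variable C : numClosedFieldType.
Lemma adj_delta m n (i : 'I_m) (j : 'I_n) : adjmx (delta_mx i j : 'M[C]__) = delta_mx j i.
Proof. by apply/matrixP => a b; rewrite !mxE; case: (_ == _); case: (_ == _); rewrite /= ?rmorph1 ?rmorph0. Qed.

Lemma adjmxD m n (A B : 'M[C]_(m, n)) : adjmx (A + B) = adjmx A + adjmx B.
Proof. by apply/matrixP => i j; rewrite !mxE rmorphD. Qed.
Lemma adjmxZ m n c (A : 'M[C]_(m, n)) : adjmx (c *: A) = c^* *: adjmx A.
Proof. by apply/matrixP => i j; rewrite !mxE rmorphM. Qed.

Lemma qform_delta n (Y : 'M[C]_n) (i j : 'I_n) :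
  ((delta_mx 0 i : 'rV[C]_n) *m Y *m (delta_mx j 0 : 'cV[C]_n)) 0 0 = Y i j.
Proof. by rewrite -mulmxA -colE -rowE !mxE. Qed.

Lemma qform_delta1 n (Y : 'M[C]_n) (i j : 'I_n) :
  ((delta_mx 0 i : 'rV[C]_n) *m Y *m (delta_mx j 0 : 'cV[C]_n)) = (Y i j)%:M.
Proof. by apply/matrixP => a b; rewrite !ord1 qform_delta !mxE eqxx mulr1n. Qed.

Lemma psd_diag_ge0 n (Y : 'M[C]_n) i : psd Y -> 0 <= Y i i.
Proof. by move=> [_ hq]; have := hq (delta_mx i 0); rewrite adj_delta qform_delta. Qed.

Lemma psd_herm n (Y : 'M[C]_n) i j : psd Y -> Y j i = (Y i j)^*.
Proof. by move=> [/eqP hY _]; rewrite -{1}hY !mxE. Qed.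

Lemma psd_zero_row n (Y : 'M[C]_n) i j : psd Y -> Y i i = 0 -> Y i j = 0.
Proof.
move=> hP hii; have hjj := psd_diag_ge0 j hP.
have hji := psd_herm i j hP.
case: hP => _ hq; apply/eqP; apply/negPn/negP => hy.
set y := Y i j in hji hy.
set c := - (Y j j + 1) / y^*.
have := hq (c *: delta_mx i 0 + delta_mx j 0).
rewrite adjmxD adjmxZ !adj_delta !mulmxDl !mulmxDr -!scalemxAl -!scalemxAr.
rewrite !qform_delta1 !mxE !eqxx !mulr1n hii hji.
have rjj : (Y j j)^* = Y j j by apply/CrealP; apply: ger0_real.
have yc0 : y^* != 0 by rewrite conjC_eq0.
have e1 : c * y^* = - (Y j j + 1) by rewrite /c mulrVK // unitfE.
have e2 : c^* * y = - (Y j j + 1).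
  by rewrite -[X in _ * X](conjCK y) -rmorphM e1 rmorphN rmorphD rmorph1 -/(conjC (Y j j)) rjj.
rewrite -/y e1 e2 mulr0 mulr0 add0r.
have -> : - (Y j j + 1) + (- (Y j j + 1) + Y j j) = - (Y j j + 2).
  by ring.
have : 0 < Y j j + 2 by rewrite ltr_wpDl.
by rewrite -oppr_lt0 => h1 h2; have := lt_le_trans h1 h2; rewrite ltxx.
Qed.
Lemma adjmx_tC m n (A : 'M[C]_(m, n)) : adjmx A = A ^t conjC.
Proof. by rewrite /adjmx map_trmx. Qed.
Lemma adjmx_mul m n p (A : 'M[C]_(m, n)) (B : 'M[C]_(n, p)) :
  adjmx (A *m B) = adjmx B *m adjmx A.
Proof. by rewrite /adjmx map_mxM trmx_mul. Qed.
Lemma adjmxK m n (A : 'M[C]_(m, n)) : adjmx (adjmx A) = A.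
Proof. by apply/matrixP => i j; rewrite !mxE conjCK. Qed.
Lemma adjmx_diag n (d : 'rV[C]_n) : adjmx (diag_mx d) = diag_mx (map_mx Num.conj d).
Proof.
apply/matrixP => i j; rewrite !mxE rmorphMn.
by case: eqVneq => [->|_]; rewrite ?mulr0n.
Qed.

Lemma herm_spectral n (X : 'M[C]_n) : hermitian X ->
  exists (P : 'M[C]_n) (d : 'rV[C]_n),
   [/\ P *m adjmx P = 1%:M, adjmx P *m P = 1%:M, forall i, (d 0 i)^* = d 0 i
     & X = adjmx P *m diag_mx d *m P].
Proof.
move=> /eqP hX.
have hn : X \is normalmx by apply/normalmxP; rewrite -adjmx_tC hX.
have /orthomx_spectralP hE := hn.
set P := spectralmx X in hE; set d := spectral_diag X in hE.
have hU : P \is unitarymx by apply: spectral_unitarymx.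
have hPi : invmx P = adjmx P by rewrite invmx_unitary // adjmx_tC.
have h1 : P *m adjmx P = 1%:M by rewrite adjmx_tC; apply/unitarymxP.
have h2 : adjmx P *m P = 1%:M by rewrite -hPi mulVmx // unitarymx_unit.
exists P, d; split => //; last by rewrite -hPi.
have hD : diag_mx d = P *m X *m adjmx P.
  by rewrite hE -hPi !mulmxA mulmxV ?unitarymx_unit // mul1mx -mulmxA mulmxV ?unitarymx_unit // mulmx1.
move=> i; have : adjmx (diag_mx d) = diag_mx d by rewrite hD !adjmx_mul adjmxK hX mulmxA.
by rewrite adjmx_diag => /matrixP /(_ i i); rewrite !mxE eqxx !mulr1n.
Qed.
Lemma adjmxN m n (A : 'M[C]_(m, n)) : adjmx (- A) = - adjmx A.
Proof. by apply/matrixP => i j; rewrite !mxE rmorphN. Qed.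
Lemma adjmxB m n (A B : 'M[C]_(m, n)) : adjmx (A - B) = adjmx A - adjmx B.
Proof. by rewrite adjmxD adjmxN. Qed.

Lemma adjmxMn m n (A : 'M[C]_(m, n)) k : adjmx (A *+ k) = adjmx A *+ k.
Proof. elim: k => [|k IH]; last by rewrite !mulrS adjmxD IH. by apply/matrixP => i j; rewrite !mxE rmorph0. Qed.

Lemma psd_conj m n (P : 'M[C]_(m, n)) (Y : 'M[C]_n) :
  psd Y -> psd (P *m Y *m adjmx P).
Proof.
move=> [/eqP hY hq]; split.
  by apply/eqP; rewrite !adjmx_mul adjmxK hY mulmxA.
move=> x; have := hq (adjmx P *m x).
by rewrite adjmx_mul adjmxK !mulmxA.
Qed.

Lemma psd_diag n (e : 'rV[C]_n) : (forall i, 0 <= e 0 i) -> psd (diag_mx e).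
Proof.
move=> he; split.
  apply/eqP; rewrite adjmx_diag; congr diag_mx; apply/matrixP => i j.
  by rewrite !ord1 mxE; apply/CrealP; apply: ger0_real.
move=> x; rewrite mul_mx_diag mxE; apply: sumr_ge0 => k _.
rewrite !mxE mulrAC; apply: mulr_ge0 => //.
by rewrite mulrC mul_conjC_ge0.
Qed.

Definition posp (x : C) := if 0 <= x then x else 0.
Definition negp (x : C) := if 0 <= x then 0 else - x.

Lemma posp_ge0 x : 0 <= posp x. Proof. by rewrite /posp; case: ifP. Qed.
Lemma negp_ge0 x : x \is Num.real -> 0 <= negp x.
Proof. by rewrite /negp => hx; case: ifP => // /negbT; rewrite real_leNgt ?real0 // negbK oppr_ge0 => /ltW. Qed.
Lemma pospB x : posp x - negp x = x.
Proof. by rewrite /posp /negp; case: ifP; rewrite ?subr0 ?sub0r ?opprK. Qed.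

Lemma herm_decomp n (H : 'M[C]_n) : hermitian H ->
  exists A B, [/\ psd A, psd B & H = A - B].
Proof.
move=> /herm_spectral [P [d [h1 h2 hr ->]]].
have hre i : d 0 i \is Num.real by apply/CrealP.
exists (adjmx P *m diag_mx (map_mx posp d) *m P).
exists (adjmx P *m diag_mx (map_mx negp d) *m P); split.
- rewrite -{2}(adjmxK P); apply: psd_conj; apply: psd_diag => i; rewrite mxE; exact: posp_ge0.
- rewrite -{2}(adjmxK P); apply: psd_conj; apply: psd_diag => i; rewrite mxE; exact: negp_ge0.
rewrite -mulmxBl -mulmxBr -linearB /=; congr (_ *m diag_mx _ *m _).
by apply/matrixP => i j; rewrite !mxE pospB.
Qed.

Lemma phi_herm n (phi : 'End('M[C]_n)) : positive_map phi ->
  forall H, hermitian H -> hermitian (phi H).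
Proof.
move=> hpos H /herm_decomp [A [B [hA hB ->]]].
rewrite linearB; case: (hpos A hA) => /eqP hA' _; case: (hpos B hB) => /eqP hB' _.
by apply/eqP; rewrite adjmxB hA' hB'.
Qed.

Lemma phi_adj n (phi : 'End('M[C]_n)) : positive_map phi ->
  forall M, phi (adjmx M) = adjmx (phi M).
Proof.
move=> hpos M.
set H1 := M + adjmx M; set H2 := 'i *: (adjmx M - M).
have hH1 : hermitian H1 by apply/eqP; rewrite /H1 adjmxD adjmxK addrC.
have hH2 : hermitian H2.
  by apply/eqP; rewrite /H2 adjmxZ adjmxB adjmxK conjCi scaleNr -scalerN opprB.
have eM : M *+ 2 = H1 + 'i *: H2.
  by rewrite /H1 /H2 scalerA -expr2 sqrCi scaleN1r opprB addrACA subrr addr0 mulr2n.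
have eA : adjmx M *+ 2 = H1 - 'i *: H2.
  by rewrite /H1 /H2 scalerA -expr2 sqrCi scaleN1r opprK [M + _]addrC addrACA subrr addr0 mulr2n.
have h2 : (2%:R : C) != 0 by rewrite pnatr_eq0.
apply: (scalerI h2); rewrite !scaler_nat -linearMn eA -adjmxMn -linearMn eM.
clearbody H1 H2; rewrite linearB linearD !linearZ /= adjmxD adjmxZ conjCi.
move/eqP: (phi_herm hpos hH1) => ->; move/eqP: (phi_herm hpos hH2) => ->.
by rewrite scaleNr scalerN.
Qed.
Lemma key n (A B : 'M[C]_n) (d : 'rV[C]_n) : psd A -> psd B ->
  A - B = diag_mx d -> \tr A = \tr (diag_mx (map_mx posp d)) ->
  A = diag_mx (map_mx posp d).
Proof.
move=> hA hB hAB htr.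
have hd i : A i i - B i i = d 0 i.
  by move/matrixP: hAB => /(_ i i); rewrite !mxE eqxx mulr1n.
pose f i := if 0 <= d 0 i then B i i else A i i.
have hf i : A i i = posp (d 0 i) + f i.
  by rewrite /f /posp; case: ifP; rewrite ?add0r // -(hd i) addrNK.
have hs : \sum_i f i = 0.
  move: htr; rewrite /mxtrace (eq_bigr _ (fun i _ => hf i)) big_split /=.
  have -> : \sum_i (diag_mx (map_mx posp d)) i i = \sum_i posp (d 0 i).
    by apply: eq_bigr => i _; rewrite !mxE eqxx mulr1n.
  by rewrite -[X in _ = X]addr0 => /addrI.
have hf0 : forall i, f i = 0.
  move=> i; apply: (psumr_eq0P _ hs) => // k _.
  by rewrite /f; case: ifP => _; apply: psd_diag_ge0.
apply/matrixP => i j; rewrite !mxE.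
have := hf0 i; rewrite /f /posp; case: ifP => hS hz.
- have hBij := psd_zero_row j hB hz.
  move/matrixP: hAB => /(_ i j); rewrite !mxE hBij subr0 => ->.
  by [].
- by rewrite (psd_zero_row j hA hz) mul0rn.
Qed.
Lemma sign_split n (d : 'rV[C]_n) : (forall i, d 0 i \is Num.real) ->
  \sum_i d 0 i = 0 -> d != 0 ->
  (exists i, 0 < d 0 i) /\ (exists j, d 0 j < 0).
Proof.
move=> hr hs hd.
have hz : (forall i, d 0 i = 0) -> False.
  by move=> h; move/eqP: hd; apply; apply/matrixP => i j; rewrite ord1 !mxE h.
split.
- have [i hi|hn] := pickP (fun i => 0 < d 0 i); first by exists i.
  exfalso; apply: hz => i; apply/eqP; rewrite -oppr_eq0; apply/eqP.
  have h0 : \sum_i - d 0 i = 0 by rewrite sumrN hs oppr0.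
  apply: (psumr_eq0P _ h0) => // k _.
  by rewrite oppr_ge0 real_leNgt ?real0 ?hr // hn.
- have [i hi|hn] := pickP (fun i => d 0 i < 0); first by exists i.
  exfalso; apply: hz => i; apply: (psumr_eq0P _ hs) => // k _.
  by rewrite real_leNgt ?real0 ?hr // hn.
Qed.

Lemma tr_conj n (P M : 'M[C]_n) : adjmx P *m P = 1%:M ->
  \tr (P *m M *m adjmx P) = \tr M.
Proof. by move=> h; rewrite mxtrace_mulC mulmxA h mul1mx. Qed.

Lemma unconj n (P M : 'M[C]_n) : adjmx P *m P = 1%:M ->
  adjmx P *m (P *m M *m adjmx P) *m P = M.
Proof. by move=> h; rewrite !mulmxA h mul1mx -mulmxA h mulmx1. Qed.

Lemma conj_unconj n (P M : 'M[C]_n) : P *m adjmx P = 1%:M ->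
  P *m (adjmx P *m M *m P) *m adjmx P = M.
Proof. by move=> h; rewrite !mulmxA h mul1mx -mulmxA h mulmx1. Qed.

Lemma herm_fixed_main n (phi : 'End('M[C]_n)) (X : 'M[C]_n) :
  positive_map phi -> trace_preserving phi ->
  hermitian X -> phi X = X -> \tr X = 0 -> X != 0 ->
  exists A : 'M[C]_n, [/\ A != 0, psd A, \det A = 0 & phi A = A].
Proof.
move=> hpos htp hX hfx htr hX0.
have [P [d [h1 h2 hr hE]]] := herm_spectral hX.
have hre i : d 0 i \is Num.real by apply/CrealP.
set Xp := adjmx P *m diag_mx (map_mx posp d) *m P.
set Xn := adjmx P *m diag_mx (map_mx negp d) *m P.
have hXp : psd Xp.
  rewrite /Xp -{2}(adjmxK P); apply: psd_conj; apply: psd_diag => i; rewrite mxE; exact: posp_ge0.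
have hXn : psd Xn.
  rewrite /Xn -{2}(adjmxK P); apply: psd_conj; apply: psd_diag => i; rewrite mxE; exact: negp_ge0.
have hXd : X = Xp - Xn.
  rewrite hE /Xp /Xn -mulmxBl -mulmxBr -linearB /=; congr (_ *m diag_mx _ *m _).
  by apply/matrixP => i j; rewrite !mxE pospB.
have hD : diag_mx d = P *m X *m adjmx P by rewrite hE conj_unconj.
have hA := psd_conj P (hpos _ hXp).
have hB := psd_conj P (hpos _ hXn).
have hAB : P *m phi Xp *m adjmx P - P *m phi Xn *m adjmx P = diag_mx d.
  by rewrite -mulmxBl -mulmxBr -linearB /= -hXd hfx hD.
have htrA : \tr (P *m phi Xp *m adjmx P) = \tr (diag_mx (map_mx posp d)).
  by rewrite tr_conj // htp /Xp mxtrace_mulC mulmxA h1 mul1mx.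
have hk := key hA hB hAB htrA.
have hfp : phi Xp = Xp by rewrite -(unconj (phi Xp) h2) hk.
have [[i hi] [j hj]] : (exists i, 0 < d 0 i) /\ (exists j, d 0 j < 0).
  apply: sign_split => //.
    by rewrite -mxtrace_diag hD tr_conj.
  apply/eqP => hd0; move/eqP: hX0; apply; rewrite hE hd0 linear0 mulmx0 mul0mx //.
exists Xp; split => //.
- apply/eqP => hz.
  have : diag_mx (map_mx posp d) = 0 by rewrite -hk hz linear0 mulmx0 mul0mx.
  move/matrixP => /(_ i i); rewrite !mxE eqxx mulr1n /posp (ltW hi) => h.
  by move: hi; rewrite h ltxx.
- rewrite /Xp !det_mulmx det_diag (bigD1 j) //= mxE /posp.
  by rewrite real_leNgt ?real0 ?hre // hj /= mul0r mulr0 mul0r.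
Qed.
Lemma tr_adjmx n (A : 'M[C]_n) : \tr (adjmx A) = (\tr A)^*.
Proof. by rewrite /mxtrace rmorph_sum; apply: eq_bigr => i _; rewrite !mxE. Qed.
End S.

Theorem mainTheorem6 (C : numClosedFieldType) (d : nat) (phi : 'End('M[C]_d))
  (hpos : positive_map phi) (htp : trace_preserving phi)
  (hfix : (1 < \dim (fixedSpace phi))%N) :
  exists A : 'M[C]_d, [/\ A != 0, psd A, \det A = 0 & phi A = A].
Proof.
pose f : 'Hom('M[C]_d, C^o) := linfun (@mxtrace C d : 'M[C]_d -> C^o).
have fE A : f A = \tr A by rewrite lfunE.
set U := fixedSpace phi.
have hdf : (\dim (f @: U) <= 1)%N.
  by apply: leq_trans (dimvS (subvf _)) _; rewrite dimvf /dim /=.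
have hK : (0 < \dim (U :&: lker f))%N.
  have := limg_ker_dim f U; move: hdf hfix; rewrite -/U.
  lia.
set Y := vpick (U :&: lker f).
have hY0 : Y != 0 by rewrite vpick0 -dimv_eq0 -lt0n.
have /memv_capP [hYU hYK] := memv_pick (U :&: lker f).
have hfY : phi Y = Y by apply/fixedSpaceP.
have htY : \tr Y = 0 by move: hYK; rewrite memv_ker fE => /eqP.
have htYa : \tr (adjmx Y) = 0 by rewrite tr_adjmx htY rmorph0.
have hfYa : phi (adjmx Y) = adjmx Y by rewrite phi_adj // hfY.
set H1 := Y + adjmx Y; set H2 := 'i *: (adjmx Y - Y).
have hH1 : hermitian H1 by apply/eqP; rewrite /H1 adjmxD adjmxK addrC.
have hH2 : hermitian H2.
  by apply/eqP; rewrite /H2 adjmxZ adjmxB adjmxK conjCi scaleNr -scalerN opprB.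
have hf1 : phi H1 = H1 by rewrite /H1 linearD /= hfY hfYa.
have hf2 : phi H2 = H2 by rewrite /H2 linearZ linearB /= hfY hfYa.
have ht1 : \tr H1 = 0 by rewrite /H1 mxtraceD htY htYa addr0.
have ht2 : \tr H2 = 0 by rewrite /H2 mxtraceZ raddfB /= htY htYa subr0 mulr0.
have [h10|h10] := eqVneq H1 0; last exact: (herm_fixed_main hpos htp hH1 hf1 ht1 h10).
have [h20|h20] := eqVneq H2 0; last exact: (herm_fixed_main hpos htp hH2 hf2 ht2 h20).
exfalso; move: hY0; apply/negP; rewrite negbK.
move/eqP: h20; rewrite /H2 scaler_eq0 (negbTE (neq0Ci C)) /= subr_eq0 => /eqP hA.
move/eqP: h10; rewrite /H1 hA -mulr2n -scaler_nat scaler_eq0 pnatr_eq0 /=.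
by [].
Qed.
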